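(* Every Euclidean domain that does not contain a field (as a subring) is Egyptian.
   Context: A Euclidean function on an integral domain $D$ is a function $f: D\setminus\{0\} \to \mathbb{Z}$ such that for all nonzero $a,b \in D$: (1) $f(ab) \geq f(a)$, and (2) there exist $q,r \in D$ with $b = aq + r$ and either $r=0$ or $f(r) < f(a)$. A Euclidean domain is an integral domain admitting a Euclidean function. With $K$ the fraction field of $D$, $D$ is Egyptian if every nonzero element of $K$ is a sum of reciprocals of distinct nonzero elements of $D$. *)

(* Defs.v *)
From mathcomp Require Import all_boot all_order all_algebra.
From mathcomp Require Import fraction.
Set Implicit Arguments. Unset Strict Implicit. Unset Printing Implicit Defensive.
Import Order.TTheory GRing.Theory Num.Theory.
Local Open Scope ring_scope.

(* f : D \ {0} -> Z is a Euclidean function (values of f at 0 are irrelevant). *)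
Definition euclidean_function (D : idomainType) (f : D -> int) : Prop :=
  (forall a b : D, a != 0 -> b != 0 -> f a <= f (a * b)) /\
  (forall a b : D, a != 0 -> b != 0 ->
     exists q r : D, b = a * q + r /\ (r = 0 \/ f r < f a)).

Definition euclidean_domain (D : idomainType) : Prop :=
  exists f : D -> int, euclidean_function f.

Definition subfield_of (D : idomainType) (S : pred D) : Prop :=
  [/\ 1 \in S,
      (forall x y, x \in S -> y \in S -> x - y \in S),
      (forall x y, x \in S -> y \in S -> x * y \in S) &
      (forall x, x \in S -> x != 0 -> exists2 y, y \in S & x * y = 1)].

Definition contains_field (D : idomainType) : Prop :=
  exists S : pred D, subfield_of S.

Definition egyptian (D : idomainType) : Prop :=
  forall x : {fraction D}, x != 0 ->
    exists s : seq D, [/\ uniq s, all (fun d => d != 0) s &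
                          x = \sum_(d <- s) (tofrac d)^-1].

(* Main.v *)
Require Import Defs.
From mathcomp Require Import all_boot all_order all_algebra.
From mathcomp Require Import fraction zify ring lra.
From mathcomp Require Import boolp.
Set Implicit Arguments. Unset Strict Implicit. Unset Printing Implicit Defensive.
Import Order.TTheory GRing.Theory Num.Theory.
Local Open Scope ring_scope.

Section P1.
Variable D : idomainType.
Local Notation K := {fraction D}.

Definition Gs (x : K) := exists s : seq D,
  all (fun d => d != 0) s /\ x = \sum_(d <- s) (tofrac d)^-1.

Lemma Gs0 : Gs 0.
Proof. by exists [::]; rewrite big_nil. Qed.

Lemma GsD x y : Gs x -> Gs y -> Gs (x + y).
Proof.
move=> [s [hs ->]] [t [ht ->]]; exists (s ++ t).
by rewrite all_cat hs ht big_cat.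
Qed.

Lemma GsN x : Gs x -> Gs (- x).
Proof.
move=> [s [hs ->]]; exists (map (fun d => - d) s); split.
  by rewrite all_map; apply: sub_all hs => d /=; rewrite oppr_eq0.
by rewrite big_map -sumrN; apply: eq_bigr => d _; rewrite tofracN invrN.
Qed.

Lemma Gsdiv x e : e != 0 -> Gs x -> Gs (x / tofrac e).
Proof.
move=> e0 [s [hs ->]]; exists (map (fun d => d * e) s); split.
  by rewrite all_map; apply: sub_all hs => d /= d0; rewrite mulf_neq0.
by rewrite big_map mulr_suml; apply: eq_bigr => d _; rewrite tofracM invfM.
Qed.

Lemma Gsinv e : e != 0 -> Gs (tofrac e)^-1.
Proof. by move=> e0; exists [:: e]; rewrite /= e0 big_seq1. Qed.

Lemma GsMn x m : Gs x -> Gs (x *+ m).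
Proof.
move=> hx; elim: m => [|m IH]; first by rewrite mulr0n; exact: Gs0.
by rewrite mulrS; apply: GsD.
Qed.

Variable f : D -> int.
Hypothesis hf : euclidean_function f.

Lemma f_ge1 a : a != 0 -> f 1 <= f a.
Proof. by move=> a0; have := hf.1 1 a (oner_neq0 _) a0; rewrite mul1r. Qed.

Lemma f_strict b c : b \notin GRing.unit -> b != 0 -> c != 0 -> f c < f (c * b).
Proof.
move=> bu b0 c0.
have [q [r [hc hr]]] := hf.2 (c * b) c (mulf_neq0 c0 b0) c0.
have hr' : r = c * (1 - b * q).
  have -> : r = c - c * b * q by rewrite {1}hc addrAC subrr add0r.
  ring.
have [r0|r0] := eqVneq r 0.
  move: hr'; rewrite r0 => /esym/eqP; rewrite mulf_eq0 (negPf c0) /= subr_eq0.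
  move=> /eqP h; case/negP: bu; apply/unitrPr; exists q; by rewrite -h.
case: hr => [/eqP|hlt]; first by rewrite (negPf r0).
have h1 : 1 - b * q != 0 by apply: contraNneq r0 => h; rewrite hr' h mulr0.
apply: le_lt_trans hlt; rewrite hr'; exact: hf.1.
Qed.

Lemma f_pow N : N \notin GRing.unit -> N != 0 -> forall k : nat, f 1 + k%:Z <= f (N ^+ k).
Proof.
move=> Nu N0; elim=> [|k IH]; first by rewrite expr0 addr0.
have h2 := f_strict Nu N0 (expf_neq0 k N0).
rewrite exprSr; move: IH h2; set u := f 1; set v := f (N ^+ k); set w := f _; lia.
Qed.

Lemma G_D n : (n%:R : D) != 0 -> (n%:R : D) \notin GRing.unit ->
  forall a : D, Gs (tofrac a).
Proof.
move=> n0 nu a.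
have [->|a0] := eqVneq a 0; first by rewrite tofrac0; exact: Gs0.
suff H : forall k : nat, forall a, a != 0 -> f a - f 1 < k%:Z -> Gs (tofrac a).
  apply: (H `|f a - f 1|%N.+1 a a0); move: (f_ge1 a0); set u := f 1; set v := f a; lia.
clear a a0; elim=> [|k IH] a a0 hk; first by move: (f_ge1 a0) hk; set u := f 1; set v := f a; lia.
set N : D := n%:R.
set m := `|f a - f 1|%N.
have hpow := f_pow nu n0 m.
have [q [r [hN hr]]] := hf.2 a (N ^+ m) a0 (expf_neq0 m n0).
have hm : f a - f 1 = m%:Z by move: (f_ge1 a0); rewrite /m; set u := f 1; set v := f a; lia.
have q0 : q != 0.
  apply/negP => /eqP q0; move: hN; rewrite q0 mulr0 add0r => hN.
  case: hr => [r0|hlt]; first by move: (expf_neq0 m n0); rewrite hN r0 eqxx.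
  move: hlt hpow hm; rewrite -hN; set u := f 1; set v := f a; set w := f _; lia.
have ha : tofrac a = tofrac (N ^+ m) / tofrac q - tofrac r / tofrac q.
  rewrite -mulrBl -tofracB hN addrK tofracM mulfK //.
  by rewrite tofrac_eq0.
rewrite ha; apply: GsD; last apply: GsN.
  rewrite tofracXn rmorph_nat -natrX mulr_natl; apply: GsMn; exact: Gsinv.
have [->|r0] := eqVneq r 0; first by rewrite tofrac0 mul0r; exact: Gs0.
apply: Gsdiv => //; apply: (IH r r0).
case: hr => [/eqP|hlt]; first by rewrite (negPf r0).
move: hlt hk; set u := f 1; set v := f a; set w := f r; lia.
Qed.
End P1.

Lemma greedy (k a b : nat) : (a <= k)%N -> (0 < a)%N -> (a <= b)%N ->
  exists M : seq nat, [/\ uniq M, all (fun m => b <= a * m)%N M &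
    a%:R / b%:R = \sum_(m <- M) (m%:R)^-1 :> rat].
Proof.
elim: k a b => [|k IH] a b hak ha hab; first by lia.
set c := ((b + a.-1) %/ a)%N.
have hdiv := divn_eq (b + a.-1) a.
have hmod := ltn_pmod (b + a.-1) ha.
rewrite -/c in hdiv.
have hca : (b <= c * a)%N by lia.
have hca' : (c * a < b + a)%N by lia.
have hc : (0 < c)%N by nia.
set a' := (c * a - b)%N.
have b0 : (b%:R : rat) != 0 by rewrite pnatr_eq0; lia.
have c0 : (c%:R : rat) != 0 by rewrite pnatr_eq0; lia.
have ha'e : a'%:R = c%:R * a%:R - b%:R :> rat by rewrite /a' natrB // natrM.
have [a'0|a'0] := eqVneq a' 0%N.
  exists [:: c]; split => //=; first by rewrite andbT mulnC.
  rewrite big_seq1; have hb : b = (c * a)%N by lia.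
  have a0 : (a%:R : rat) != 0 by rewrite pnatr_eq0; lia.
  rewrite hb natrM; field; by rewrite a0 c0.
have [M [uM aM sM]] := IH a' (b * c)%N ltac:(lia) ltac:(lia) ltac:(nia).
exists (c :: M); split.
- rewrite /= uM andbT; apply/negP => cM.
  have := allP aM c cM; nia.
- rewrite /= mulnC hca /=; apply/allP => m mM.
  have := allP aM m mM; nia.
- rewrite big_cons -sM ha'e natrM; field.
  by rewrite b0 c0.
Qed.

Lemma half_bound (A : nat) : (0 < A)%N ->
  1 / 2 <= \sum_(A.+1 <= k < (A.*2).+1) (k%:R : rat)^-1.
Proof.
move=> hA.
apply: (@le_trans _ _ (\sum_(A.+1 <= k < (A.*2).+1) ((A.*2)%:R : rat)^-1)).
  rewrite sumr_const_nat.
  have -> : ((A.*2).+1 - A.+1 = A)%N by lia.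
  have a0 : (A%:R : rat) != 0 by rewrite pnatr_eq0; lia.
  rewrite -mulr_natr -muln2 natrM [X in _ <= X](_ : _ = 1 / 2) //.
  by field; rewrite a0.
apply: ler_sum_nat => k /andP [h1 h2].
rewrite lef_pV2 ?posrE ?ltr0n ?ler_nat; lia.
Qed.

Lemma exists_cross (P : nat -> bool) T d : P T -> ~~ P (T + d)%N ->
  exists U, [/\ (T <= U)%N, P U & ~~ P U.+1].
Proof.
elim: d => [|d IH] hT hd; first by rewrite addn0 hT in hd.
have [h|h] := boolP (P (T + d)%N).
  by exists (T + d)%N; rewrite leq_addr h -addnS.
by have [U [h1 h2 h3]] := IH hT h; exists U.
Qed.

Lemma LDL (T : nat) : exists M : seq nat, [/\ uniq M, all (fun m => T < m)%N M &
  \sum_(m <- M) (m%:R : rat)^-1 = 1].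
Proof.
wlog hT : T / (0 < T)%N.
  move=> H; have [M [u a s]] := H T.+1 isT; exists M; split => //.
  by apply: sub_all a => m /=; lia.
pose H U := \sum_(T.+1 <= k < U.+1) (k%:R : rat)^-1.
have H4 : 1 <= H ((T.*2).*2).
  rewrite /H (@big_cat_nat _ _ _ (T.*2).+1) /=; [|lia|lia].
  have := half_bound hT; have := @half_bound (T.*2) ltac:(lia); lra.
have hE : ~~ (H (T + ((T.*2).*2 - T))%N < 1).
  by rewrite subnKC /= -?leNgt //; lia.
have [U [hTU hU hU1]] := @exists_cross (fun U => H U < 1) T ((T.*2).*2 - T)%N
  ltac:(by rewrite /H big_geq) hE.
rewrite /= -leNgt /H big_nat_recr //= -/(H U) in hU1.
set r := 1 - H U.
have r0 : 0 < r by rewrite /r subr_gt0.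
have r1 : r <= ((U.+1)%:R)^-1 by rewrite /r lerBlDl.
set a := `|numq r|%N; set b := `|denq r|%N.
have ha : (a%:R : rat) = (numq r)%:~R by rewrite /a natr_absz gtr0_norm // numq_gt0.
have hb : (b%:R : rat) = (denq r)%:~R by rewrite /b natr_absz gtr0_norm // denq_gt0.
have hr : r = a%:R / b%:R by rewrite ha hb divq_num_den.
have a0 : (0 < a)%N by rewrite -(ltr0n rat) ha ltr0z numq_gt0.
have b0 : (0 < b)%N by rewrite -(ltr0n rat) hb ltr0z denq_gt0.
have r1' : r <= 1.
  apply: (le_trans r1); rewrite invf_le1 ?ltr0n // ler1n; lia.
have hab : (a <= b)%N.
  rewrite -(ler_nat rat) -[X in _ <= X]mul1r -ler_pdivrMr ?ltr0n //.
  by rewrite -hr.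
have [M' [uM aM sM]] := @greedy a a b (leqnn a) a0 hab.
have hbig : forall m, m \in M' -> (U < m)%N.
  move=> m mM; have hm := allP aM m mM.
  have e1 : r * (U.+1)%:R <= 1.
    by rewrite -ler_pdivlMr ?ltr0n // mul1r.
  have e2 : 1 <= r * m%:R.
    rewrite hr mulrAC ler_pdivlMr ?ltr0n // mul1r -natrM ler_nat //.
  rewrite -(ler_nat rat) -(ler_pM2l r0); exact: le_trans e1 e2.
exists (index_iota T.+1 U.+1 ++ M'); split.
- rewrite cat_uniq /index_iota iota_uniq uM /= andbT; apply/hasPn => m hm /=.
  rewrite -/(index_iota T.+1 U.+1) mem_index_iota; have := hbig m hm; lia.
- rewrite all_cat; apply/andP; split; apply/allP => m.
    rewrite mem_index_iota; lia.
  by move=> /hbig; lia.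
- by rewrite big_cat /= -sM -hr /r addrC subrK.
Qed.

Section Transfer.
Variable E : fieldType.
Hypothesis hE : forall m : nat, (0 < m)%N -> (m%:R : E) != 0.

Lemma sum_inv_eq (M : seq nat) : all (fun m => 0 < m)%N M ->
  \sum_(m <- M) (m%:R : E)^-1 =
  (\sum_(m <- M) (\prod_(i <- M) i %/ m))%N%:R / (\prod_(i <- M) i)%:R.
Proof.
move=> hM; set P := (\prod_(i <- M) i)%N.
have P0 : (0 < P)%N.
  rewrite /P; elim: M hM {P} => [|x M IH] /=; first by rewrite big_nil.
  by move=> /andP [hx hM]; rewrite big_cons muln_gt0 hx IH.
rewrite natr_sum mulr_suml; apply: eq_big_seq => m hm.
have m0 : (0 < m)%N := allP hM m hm.
have dm : (m %| P)%N by rewrite /P (big_rem m hm) /= dvdn_mulr.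
have q0 : (0 < P %/ m)%N by rewrite divn_gt0 // dvdn_leq.
rewrite -{2}(divnK dm) natrM; field.
by rewrite !hE.
Qed.
End Transfer.

Lemma transfer (E : fieldType) (M : seq nat) :
  (forall m : nat, (0 < m)%N -> (m%:R : E) != 0) ->
  all (fun m => 0 < m)%N M -> \sum_(m <- M) (m%:R : rat)^-1 = 1 ->
  \sum_(m <- M) (m%:R : E)^-1 = 1.
Proof.
move=> hE hM hs.
have hQ : forall m : nat, (0 < m)%N -> (m%:R : rat) != 0 by move=> m m0; rewrite pnatr_eq0; lia.
have P0 : (0 < \prod_(i <- M) i)%N.
  elim: M hM {hs} => [|x M IH] /=; first by rewrite big_nil.
  by move=> /andP [hx hM]; rewrite big_cons muln_gt0 hx IH.
move: hs; rewrite !sum_inv_eq // => /eqP.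
rewrite -[X in _ == X](divff (hQ _ P0)) => /eqP h.
have h' := mulIf (invr_neq0 (hQ _ P0)) h.
move/eqP: h'; rewrite eqr_nat => /eqP ->.
by rewrite divff // hE.
Qed.

Section Avoid.
Variable D : idomainType.
Local Notation K := {fraction D}.
Hypothesis hchar : forall m : nat, (0 < m)%N -> (m%:R : D) != 0.

Lemma natr_inj_D (m m' : nat) : (m%:R : D) = m'%:R -> m = m'.
Proof.
wlog h : m m' / (m <= m')%N.
  move=> H e; have [hm|hm] := leqP m m'; first exact: H.
  by apply/esym/H => //; lia.
move=> e; apply/eqP; rewrite eqn_leq h /=.
have [hp|hp] := posnP (m' - m)%N; first by lia.
by move: (hchar hp); rewrite natrB // e subrr eqxx.
Qed.

Lemma bad_bound (F : seq D) (e : D) : e != 0 ->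
  exists T : nat, forall m : nat, e * m%:R \in F -> (m <= T)%N.
Proof.
move=> e0; elim: F => [|x F [T HT]]; first by exists 0%N.
have [[m0 hm0]|hno] := pselect (exists m : nat, e * m%:R = x).
  exists (maxn T m0) => m; rewrite inE => /orP [/eqP hx|hF].
    have -> : m = m0 by apply: natr_inj_D; apply: (mulfI e0); rewrite hx hm0.
    by rewrite leq_maxr.
  by rewrite leq_max HT.
exists T => m; rewrite inE => /orP [/eqP hx|hF]; last exact: HT.
by exfalso; apply: hno; exists m.
Qed.

Lemma avoid (F : seq D) (e : D) : e != 0 ->
  exists L : seq D, [/\ uniq L, all (fun d => d != 0) L,
    all (fun l => l \notin F) L &
    (tofrac e)^-1 = \sum_(l <- L) (tofrac l)^-1].
Proof.
move=> e0; have [T HT] := bad_bound F e0.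
have [M [uM aM sM]] := LDL T.
have hK : forall m : nat, (0 < m)%N -> (m%:R : K) != 0.
  by move=> m m0; rewrite -(rmorph_nat (@tofrac D)) tofrac_eq0 hchar.
have aM0 : all (fun m => 0 < m)%N M by apply: sub_all aM => m /=; lia.
exists (map (fun m : nat => e * m%:R) M); split.
- rewrite map_inj_uniq // => m m' /(mulfI e0); exact: natr_inj_D.
- rewrite all_map; apply/allP => m mM /=; rewrite mulf_neq0 // hchar //.
  exact: (allP aM0).
- rewrite all_map; apply/allP => m mM /=; apply/negP => /HT.
  have := allP aM m mM; lia.
- rewrite big_map.
  under eq_bigr do rewrite tofracM rmorph_nat invfM.
  by rewrite -mulr_sumr (transfer hK aM0 sM) mulr1.
Qed.

Lemma distinctify (s : seq D) : all (fun d => d != 0) s ->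
  exists L : seq D, [/\ uniq L, all (fun d => d != 0) L &
    \sum_(d <- s) (tofrac d)^-1 = \sum_(l <- L) (tofrac l)^-1].
Proof.
elim: s => [|d s IH] /=; first by exists [::].
move=> /andP [d0 hs]; have [L [uL aL sL]] := IH hs.
have [Ld [uLd aLd nLd sLd]] := avoid L d0.
exists (Ld ++ L); split.
- rewrite cat_uniq uLd uL andbT /=; apply/hasPn => x xL /=.
  apply/negP => xLd; have := allP nLd x xLd; by rewrite xL.
- by rewrite all_cat aLd aL.
- by rewrite big_cons big_cat sLd sL.
Qed.
End Avoid.

Lemma field_of_units (D : idomainType) :
  (forall n : nat, (n%:R : D) != 0 -> (n%:R : D) \is a GRing.unit) ->
  contains_field D.
Proof.
move=> H.
pose S := fun x : D => `[< exists (z k : int), (k%:~R : D) != 0 /\ x * k%:~R = z%:~R >].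
have hzu : forall z : int, (z%:~R : D) != 0 -> (z%:~R : D) \is a GRing.unit.
  case=> n /= hn; first exact: H.
  rewrite NegzE rmorphN /= unitrN; apply: H.
  by move: hn; rewrite NegzE rmorphN /= oppr_eq0.
exists S; split.
- apply/asboolP; exists 1, 1; split; [exact: oner_neq0 | by rewrite mulr1].
- move=> x y /asboolP [z [k [k0 hx]]] /asboolP [w [l [l0 hy]]].
  apply/asboolP; exists (z * l - w * k), (k * l); split.
    by rewrite intrM mulf_neq0.
  by rewrite intrM intrB !intrM -hx -hy; ring.
- move=> x y /asboolP [z [k [k0 hx]]] /asboolP [w [l [l0 hy]]].
  apply/asboolP; exists (z * w), (k * l); split.
    by rewrite intrM mulf_neq0.
  by rewrite !intrM -hx -hy; ring.
- move=> x /asboolP [z [k [k0 hx]]] x0.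
  have z0 : (z%:~R : D) != 0 by rewrite -hx mulf_neq0.
  have zu := hzu z z0.
  exists (k%:~R / z%:~R).
    apply/asboolP; exists k, z; split => //.
    by rewrite divrK.
  by rewrite mulrA hx divrr.
Qed.

Lemma nofield_nonunit (D : idomainType) : ~ contains_field D ->
  exists n : nat, (n%:R : D) != 0 /\ (n%:R : D) \notin GRing.unit.
Proof.
move=> hnf; apply: contrapT => hne; apply: hnf; apply: field_of_units => n n0.
apply: contrapT => nu; apply: hne; exists n; split => //; exact/negP.
Qed.

Lemma nofield_char (D : idomainType) : ~ contains_field D ->
  forall m : nat, (0 < m)%N -> (m%:R : D) != 0.
Proof.
move=> hnf m m0; apply/negP => /eqP hm.
have [p hp] := natf0_pchar m0 (introT eqP hm).
have pp := pcharf_prime hp; have p0 := pcharf0 hp.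
apply: hnf; apply: field_of_units => n n0.
have cp : coprime p n.
  rewrite prime_coprime //; apply/negP => /dvdnP [q hq].
  by move: n0; rewrite hq natrM p0 mulr0 eqxx.
have [a _ ha] := Bezoutl n (prime_gt0 pp).
move: ha; rewrite (eqP cp) => /dvdnP [t ht].
apply/unitrPr; exists (- a%:R).
have : ((1 + a * n)%N%:R : D) = 0 by rewrite ht natrM p0 mulr0.
rewrite natrD natrM => h.
have -> : (n%:R * - a%:R : D) = 1 - (1 + a%:R * n%:R) by ring.
by rewrite h subr0.
Qed.

Lemma frac_repr (D : idomainType) (x : {fraction D}) :
  exists a b : D, b != 0 /\ x = tofrac a / tofrac b.
Proof.
elim/quotW: x => r.
exists r.1, r.2; split; first exact: denom_ratioP.
have hd : tofrac r.2 != 0 :> {fraction D} by rewrite tofrac_eq0 denom_ratioP.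
apply: (canRL (mulfK hd)).
rewrite /tofrac; unlock. rewrite [_ * _]piE.
apply/eqmodP => /=. rewrite FracField.equivfE /FracField.mulf /=.
rewrite !numden_Ratio ?oner_eq0 ?mulf_neq0 ?denom_ratioP ?oner_eq0 //.
by rewrite !mulr1 mulrC.
Qed.

Theorem corollary2p13 (D : idomainType) :
  euclidean_domain D -> ~ contains_field D -> egyptian D.
Proof.
move=> [f hf] hnf x x0.
have [n [n0 nu]] := nofield_nonunit hnf.
have hchar := nofield_char hnf.
have [a [b [b0 ->]]] := frac_repr x.
have [s [hs hsum]] : Gs (tofrac a / tofrac b) by apply: (Gsdiv b0); exact: (G_D hf n0 nu a).
have [L [uL aL sL]] := distinctify hchar hs.
by exists L; split => //; rewrite hsum sL.
Qed.
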